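(* Let $D\ge1$, let $Q\ge 2$ be an integer, and let $q=(3Q)^D$. Consider the cubic lattice $\mathbb{Z}^D$ in which each edge is independently an error (element of the random set $E$) with probability at most $p$. For $n\ge0$ and a box $\Sigma_n$ of side length $Q^n$, let $A_n$ be the event that some level-$n$ chunk of $E$ has at least one vertex in $\Sigma_n$, and let $a_n=\sup_{\Sigma_n}\Pr(A_n)$ over all boxes of side $Q^n$. Suppose $a_0\le p$. Then for every $n\ge1$, $a_n\le (q\,a_{n-1})^2$, and consequently for every $m\ge0$ $$\Pr(A_m)\le \big(q^2 p\big)^{2^m}=\big((3Q)^{2D}p\big)^{2^m}.$$
   Context: Distances are graph distances on $\mathbb{Z}^D$. For a set of edges (chunk) $\varepsilon$, $C(\varepsilon)$ is the set of vertices incident to its edges, and its width is $\max_{k,k'\in C(\varepsilon)}d(k,k')$. A level-$0$ chunk is a single error edge; a level-$n$ chunk is a union of two disjoint level-$(n-1)$ chunks whose width is at most $Q^n$. For a box $\Sigma_n$ of side $Q^n$, $\Sigma_n^+$ denotes the concentric box of side $3Q^n$, which is a disjoint union of $(3Q)^D$ boxes of side $Q^{n-1}$. *)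

(* Defs.v *)
From HB Require Import structures.
From mathcomp Require Import all_boot all_order all_algebra.
From Stdlib Require Import ClassicalEpsilon.
Set Implicit Arguments. Unset Strict Implicit. Unset Printing Implicit Defensive.
Import Order.TTheory GRing.Theory Num.Theory.
Local Open Scope ring_scope.

(* Vertices of Z^D and edges.  An edge is encoded canonically as (x, i):
   the edge between x and x + e_i. *)
Definition Vertex (D : nat) := {ffun 'I_D -> int}.
Definition Edge (D : nat) := (Vertex D * 'I_D)%type.

Definition shift D (x : Vertex D) (i : 'I_D) : Vertex D :=
  [ffun j => x j + Posz (nat_of_bool (j == i))].

Definition dist D (x y : Vertex D) : nat := \sum_(i < D) absz (x i - y i).

Definition chunk_vertices D (c : seq (Edge D)) : seq (Vertex D) :=
  flatten [seq [:: e.1; shift e.1 e.2] | e <- c].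

Definition width D (c : seq (Edge D)) : nat :=
  \max_(k <- chunk_vertices c) \max_(k' <- chunk_vertices c) dist k k'.

Inductive chunk_lvl D (Q : nat) : nat -> seq (Edge D) -> Prop :=
| chunk0 (e : Edge D) : chunk_lvl Q 0 [:: e]
| chunkS (n : nat) (c1 c2 : seq (Edge D)) :
    chunk_lvl Q n c1 -> chunk_lvl Q n c2 ->
    ~~ has (fun e => e \in c2) c1 ->
    (width (c1 ++ c2) <= Q ^ n.+1)%N ->
    chunk_lvl Q n.+1 (c1 ++ c2).

Definition in_box D (c : Vertex D) (L : nat) (x : Vertex D) : bool :=
  [forall i, (c i <= x i)%R && (x i < c i + Posz L)%R].

Definition A_event D (Q n : nat) (c : Vertex D) (E : Edge D -> Prop) : Prop :=
  exists ch : seq (Edge D), chunk_lvl Q n ch /\ (forall e, e \in ch -> E e) /\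
    has (in_box c (Q ^ n)) (chunk_vertices ch).

(* Finite window: edges with both endpoints in the box of corner c0, side L *)
Definition vtx D (c0 : Vertex D) (L : nat) (k : {ffun 'I_D -> 'I_L}) : Vertex D :=
  [ffun i => c0 i + Posz (k i)].

Definition WinT (D L : nat) :=
  {w : ({ffun 'I_D -> 'I_L} * 'I_D)%type | ((w.1 w.2).+1 < L)%N}.

Definition win_edge D (c0 : Vertex D) (L : nat) (w : WinT D L) : Edge D :=
  (vtx c0 (val w).1, (val w).2).

Definition indic (R : pzRingType) (P : Prop) : R :=
  if excluded_middle_informative P then 1%R else 0%R.

(* Probability of an event A (a property of the random error set E), computed
   under the independent product measure (edge e is an error with probability
   pe e) on the edges of the window; edges outside the window are taken as
   non-errors (irrelevant for events depending only on window edges). *)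
Definition Pr_win (R : realFieldType) D (pe : Edge D -> R) (c0 : Vertex D) (L : nat)
    (A : (Edge D -> Prop) -> Prop) : R :=
  (\sum_(S : {set WinT D L})
     (\prod_(w in S) pe (win_edge c0 w)) *
     (\prod_(w in ~: S) (1 - pe (win_edge c0 w))) *
     indic R (A (fun e => exists2 w, w \in S & e = win_edge c0 w)))%R.

(* Pr(A_n) for the box Sigma_n with corner c, computed on the window
   Sigma_n^+ (concentric box of side 3 Q^n), which contains every vertex of
   any level-n chunk meeting Sigma_n. *)
Definition PrA (R : realFieldType) D (Q : nat) (pe : Edge D -> R) (n : nat) (c : Vertex D) : R :=
  Pr_win pe [ffun i => (c i - Posz (Q ^ n))%R] (3 * Q ^ n) (A_event Q n c).

(* Main.v *)
Require Import Defs.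
From HB Require Import structures.
From mathcomp Require Import all_boot all_order all_algebra.
From mathcomp Require Import ring lra zify.
From Stdlib Require Import Classical ClassicalEpsilon.
Set Implicit Arguments. Unset Strict Implicit. Unset Printing Implicit Defensive.
Import Order.TTheory GRing.Theory Num.Theory.
Local Open Scope ring_scope.

Section Ind.
Variable R : realFieldType.
Lemma indicT (P : Prop) : P -> indic R P = 1.
Proof. by rewrite /indic; case: excluded_middle_informative. Qed.
Lemma indicF (P : Prop) : ~ P -> indic R P = 0.
Proof. by rewrite /indic; case: excluded_middle_informative. Qed.
Lemma indic_ge0 (P : Prop) : 0 <= indic R P.
Proof. by rewrite /indic; case: excluded_middle_informative. Qed.
Lemma indic_le1 (P : Prop) : indic R P <= 1.
Proof. by rewrite /indic; case: excluded_middle_informative. Qed.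
Lemma indic_mono (P P' : Prop) : (P -> P') -> indic R P <= indic R P'.
Proof.
move=> H; case: (classic P) => [p|np]; first by rewrite !indicT //; apply: H.
by rewrite (indicF np) indic_ge0.
Qed.
Lemma indic_ext (P P' : Prop) : (P <-> P') -> indic R P = indic R P'.
Proof. by move=> [H1 H2]; apply/le_anti; rewrite !indic_mono. Qed.
End Ind.

Section PlSec.
Variable R : realFieldType.
Variable X : Type.
Variable pe : X -> R.
Hypothesis hpe : forall e, 0 <= pe e <= 1.

Definition event := (X -> Prop) -> Prop.
Definition sect (e : X) (A : event) : event := fun E => A (fun y => y = e \/ E y).
Definition mono (A : event) := forall E F : X -> Prop, (forall x, E x -> F x) -> A E -> A F.

Fixpoint Pl (s : seq X) (A : event) : R :=
  match s with
  | [::] => indic R (A (fun _ => False))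
  | e :: s' => (1 - pe e) * Pl s' A + pe e * Pl s' (sect e A)
  end.

Lemma mono_sect e A : mono A -> mono (sect e A).
Proof. move=> mA E F H; apply: mA => x [->|/H]; [left|right] => //. Qed.

Lemma pe0 e : 0 <= pe e. Proof. by case/andP: (hpe e). Qed.
Lemma pe1 e : 0 <= 1 - pe e. Proof. by case/andP: (hpe e); rewrite subr_ge0. Qed.

Lemma Pl_ext s : forall A B, (forall E, A E <-> B E) -> Pl s A = Pl s B.
Proof.
elim: s => [|e s IH] A B H /=; first exact: indic_ext.
by rewrite (IH A B H) (IH (sect e A) (sect e B)) // => E; apply: H.
Qed.

Lemma Pl_mono s : forall A B, (forall E, A E -> B E) -> Pl s A <= Pl s B.
Proof.
elim: s => [|e s IH] A B H /=; first by apply: indic_mono; apply: H.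
by apply: lerD; apply: ler_wpM2l; rewrite ?pe0 ?pe1 //; apply: IH => // E; apply: H.
Qed.

Lemma Pl_ge0 s : forall A, 0 <= Pl s A.
Proof.
elim: s => [|e s IH] A /=; first exact: indic_ge0.
by rewrite addr_ge0 // mulr_ge0 ?pe0 ?pe1.
Qed.

Lemma Pl_le1 s : forall A, Pl s A <= 1.
Proof.
elim: s => [|e s IH] A /=; first exact: indic_le1.
have h1 := IH A; have h2 := IH (sect e A); have h3 := pe0 e; have h4 := pe1 e.
nra.
Qed.

Lemma Pl_incl_excl s : forall A B,
  Pl s (fun E => A E \/ B E) + Pl s (fun E => A E /\ B E) = Pl s A + Pl s B.
Proof.
elim: s => [|e s IH] A B /=.
  case: (classic (A (fun=> False))) => a; case: (classic (B (fun=> False))) => b.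
  - rewrite (@indicT R (A _)) // (@indicT R (B _)) // indicT; last by left.
    by rewrite indicT.
  - rewrite (@indicT R (A _)) // (@indicF R (B _)) // indicT; last by left.
    by rewrite indicF ?add0r ?addr0 //; case.
  - rewrite (@indicF R (A _)) // (@indicT R (B _)) // indicT; last by right.
    by rewrite indicF ?add0r ?addr0 //; case.
  - rewrite (@indicF R (A _)) // (@indicF R (B _)) // indicF; last by case.
    by rewrite indicF ?add0r ?addr0 //; case.
have h1 := IH A B; have h2 := IH (sect e A) (sect e B).
rewrite /sect /= in h2 *. 
transitivity ((1 - pe e) * (Pl s (fun E => A E \/ B E) + Pl s (fun E => A E /\ B E)) +
  pe e * (Pl s (fun E => A (fun y => y = e \/ E y) \/ B (fun y => y = e \/ E y)) +
          Pl s (fun E => A (fun y => y = e \/ E y) /\ B (fun y => y = e \/ E y)))).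
  by ring.
rewrite h1 h2; ring.
Qed.

Lemma Pl_union (J : finType) s : forall F : J -> event,
  Pl s (fun E => exists j, F j E) <= \sum_j Pl s (F j).
Proof.
elim: s => [|e s IH] F /=.
  case: (classic (exists j, F j (fun=> False))) => [[j hj]|nj].
    rewrite indicT; last by exists j.
    rewrite (bigD1 j) //= indicT // lerDl sumr_ge0 // => i _; exact: indic_ge0.
  by rewrite indicF // sumr_ge0 // => i _; exact: indic_ge0.
rewrite big_split /= -!mulr_sumr.
by apply: lerD; apply: ler_wpM2l; rewrite ?pe0 ?pe1 //; apply: IH.
Qed.

Definition box (A B : event) : event := fun E =>
  exists E1 E2 : X -> Prop, (forall x, E1 x -> ~ E2 x) /\ (forall x, E1 x -> E x) /\
    (forall x, E2 x -> E x) /\ A E1 /\ B E2.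

Lemma box_sect1 e A B E : mono A -> mono B -> sect e (box A B) E -> box (sect e A) (sect e B) E.
Proof.
move=> mA mB [E1 [E2 [d [s1 [s2 [a b]]]]]].
exists (fun x => E1 x /\ x <> e), (fun x => E2 x /\ x <> e); split; last split; last split.
- by move=> x [h1 _] [h2 _]; exact: d h1 h2.
- by move=> x [/s1 [//|//] ].
- by move=> x [/s2 [//|//] ].
split.
  apply: mA a => x h; case: (classic (x = e)) => [->|ne]; [left|right] => //.
apply: mB b => x h; case: (classic (x = e)) => [->|ne]; [left|right] => //.
Qed.

Lemma box_sect2 e A B E : mono A -> mono B -> sect e (box A B) E ->
  box (sect e A) B E \/ box A (sect e B) E.
Proof.
move=> mA mB [E1 [E2 [d [s1 [s2 [a b]]]]]].
case: (classic (E2 e)) => h2.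
  right; exists E1, (fun x => E2 x /\ x <> e); split; last split; last split.
  - by move=> x h [h' _]; exact: d h h'.
  - move=> x h; case: (s1 x h) => // ex; subst x; by case: (d _ h h2).
  - by move=> x [/s2 [//|//] ].
  split=> //; apply: mB b => x h; case: (classic (x = e)) => [->|ne]; [left|right] => //.
left; exists (fun x => E1 x /\ x <> e), E2; split; last split; last split.
- by move=> x [h _] h'; exact: d h h'.
- by move=> x [/s1 [//|//] ].
- move=> x h; case: (s2 x h) => // ex; subst x; by [].
split=> //; apply: mA a => x h; case: (classic (x = e)) => [->|ne]; [left|right] => //.
Qed.

Lemma box_sect3 e A B E : mono A -> mono B -> box A B E ->
  box (sect e A) B E /\ box A (sect e B) E.
Proof.
move=> mA mB [E1 [E2 [d [s1 [s2 [a b]]]]]]; split; exists E1, E2; do !split => //.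
- by apply: mA a => x h; right.
- by apply: mB b => x h; right.
Qed.

Lemma box_mono A B : mono (box A B).
Proof.
move=> E F H [E1 [E2 [d [s1 [s2 [a b]]]]]]; exists E1, E2; do !split => //.
- by move=> x /s1 /H.
- by move=> x /s2 /H.
Qed.

Lemma BK s : forall A B, mono A -> mono B -> Pl s (box A B) <= Pl s A * Pl s B.
Proof.
elim: s => [|e s IH] A B mA mB /=.
  case: (classic (box A B (fun=> False))) => [[E1 [E2 [d [s1 [s2 [a b]]]]]]|nb];
    last by rewrite indicF // mulr_ge0 // indic_ge0.
  have hA : A (fun=> False) by apply: mA a => x /s1.
  have hB : B (fun=> False) by apply: mB b => x /s2.
  rewrite (@indicT R (A _)) // (@indicT R (B _)) // mulr1; exact: indic_le1.
set w := pe e.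
have w0 : 0 <= w := pe0 e. have w1 : 0 <= 1 - w := pe1 e.
have mAe := @mono_sect e A mA; have mBe := @mono_sect e B mB.
set d := Pl s (box A B).
set c1 := Pl s (sect e (box A B)).
set a0 := Pl s A. set a1 := Pl s (sect e A). set b0 := Pl s B. set b1 := Pl s (sect e B).
have hd : d <= a0 * b0 := IH A B mA mB.
have hc1 : c1 <= a1 * b1.
  apply: le_trans (IH _ _ mAe mBe); apply: Pl_mono => E; exact: box_sect1.
have hc2 : c1 <= a1 * b0 + a0 * b1 - d.
  have ie := Pl_incl_excl s (box (sect e A) B) (box A (sect e B)).
  have m1 : c1 <= Pl s (fun E => box (sect e A) B E \/ box A (sect e B) E).
    by apply: Pl_mono => E; apply: box_sect2.
  have m2 : d <= Pl s (fun E => box (sect e A) B E /\ box A (sect e B) E).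
    by apply: Pl_mono => E; apply: box_sect3.
  have i1 : Pl s (box (sect e A) B) <= a1 * b0 := IH (sect e A) B mAe mB.
  have i2 : Pl s (box A (sect e B)) <= a0 * b1 := IH A (sect e B) mA mBe.
  lra.
have p1 : 0 <= (1 - w) * (1 - w) by rewrite mulr_ge0.
have p2 : 0 <= w * (1 - w) by rewrite mulr_ge0.
have p3 : 0 <= w * w by rewrite mulr_ge0.
have q1 := ler_wpM2l p1 hd. have q2 := ler_wpM2l p2 hc2. have q3 := ler_wpM2l p3 hc1.
nra.
Qed.
End PlSec.
Section PlEq.
Variable R : realFieldType.
Variable X : eqType.
Variable pe : X -> R.
Hypothesis hpe : forall e, 0 <= pe e <= 1.
Notation Pl := (Pl pe).

Lemma Pl_ge_indic t : forall A, mono A -> indic R (A (fun _ => False)) <= Pl t A.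
Proof.
elim: t => [|e t IH] A mA /=; first by [].
have h1 := IH A mA; have h2 := IH (sect e A) (mono_sect mA).
have h3 : indic R (A (fun _ => False)) <= indic R (sect e A (fun _ => False)).
  by apply: indic_mono; apply: mA => x [].
have w0 := pe0 hpe e; have w1 := pe1 hpe e.
have := ler_wpM2l w0 (le_trans h3 h2); have := ler_wpM2l w1 h1. lra.
Qed.

Lemma Pl_swap a b s A : mono A -> Pl [:: a, b & s] A = Pl [:: b, a & s] A.
Proof.
move=> mA /=.
have -> : Pl s (sect b (sect a A)) = Pl s (sect a (sect b A)).
  apply: Pl_ext => E; split; apply: mA => x; rewrite /=; tauto.
ring.
Qed.

Lemma Pl_rem x t : forall A, mono A -> x \in t -> Pl t A = Pl (x :: rem x t) A.
Proof.
elim: t => [|y t IH] A mA //=; rewrite inE.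
have [xy|ne] := eqVneq x y.
  move=> _; subst y; rewrite /= ?eqxx /=. by [].
move=> xt.
rewrite (IH A mA xt) (IH (sect y A) (mono_sect mA) xt).
exact: (Pl_swap y x (rem x t) mA).
Qed.

Lemma mem_rem_neq (x y : X) t : y != x -> y \in t -> y \in rem x t.
Proof.
move=> ne; elim: t => [|z t IH] //=; rewrite inE.
have [zx|nzx] := eqVneq z x.
  subst z; case/orP => [/eqP yx|//]; by rewrite yx eqxx in ne.
rewrite inE; case/orP => [->//|/IH ->]; by rewrite orbT.
Qed.

Lemma Pl_sub s : uniq s -> forall t A, {subset s <= t} -> mono A -> Pl s A <= Pl t A.
Proof.
elim: s => [|x s IH] /=; first by move=> _ t A _ mA; exact: Pl_ge_indic.
case/andP=> xs us t A st mA.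
have xt : x \in t by apply: st; rewrite inE eqxx.
rewrite (Pl_rem mA xt) /=.
have st' : {subset s <= rem x t}.
  move=> y ys; apply: mem_rem_neq; first by apply/eqP => e; subst y; rewrite ys in xs.
  by apply: st; rewrite inE ys orbT.
have h1 := IH us _ A st' mA; have h2 := IH us _ (sect x A) st' (mono_sect mA).
have w0 := pe0 hpe x; have w1 := pe1 hpe x.
by apply: lerD; apply: ler_wpM2l.
Qed.

Definition dep (A : event X) (t : seq X) := forall E, A E -> A (fun y => E y /\ y \in t).

Lemma Pl_filter t s : forall A, mono A -> dep A t -> Pl s A = Pl (filter (mem t) s) A.
Proof.
elim: s => [|e s IH] A mA dA //=.
case: ifP => et /=.
  rewrite (IH A mA dA) (IH (sect e A) (mono_sect mA)) //.
  move=> E /dA H; apply: mA H => x [[->|h] xt]; [by left|by right].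
have -> : Pl s (sect e A) = Pl s A.
  apply: Pl_ext => E; split => H; last by apply: mA H; right.
  have := dA _ H; apply: mA => x [[ex|h] xt]; last by [].
  by subst x; rewrite /= et in xt.
rewrite (IH A mA dA); ring.
Qed.

Lemma Pl_marg s t A : uniq s -> mono A -> dep A t -> Pl s A <= Pl t A.
Proof.
move=> us mA dA; rewrite (Pl_filter s mA dA); apply: Pl_sub => //.
  exact: filter_uniq.
by move=> y; rewrite mem_filter => /andP [].
Qed.
End PlEq.

Section Bridge.
Variable R : realFieldType.
Variable T : finType.
Variable X : Type.
Variable g : T -> X.
Variable pe : X -> R.

Definition EoS (S : {set T}) : X -> Prop := fun e => exists2 w, w \in S & e = g w.

Lemma sum_split (F : {set T} -> R) (x : T) (Rr : {set T}) : x \notin Rr ->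
  \sum_(S : {set T} | S \subset x |: Rr) F S =
  \sum_(S : {set T} | S \subset Rr) F S + \sum_(S : {set T} | S \subset Rr) F (x |: S).
Proof.
move=> xR; rewrite (bigID (fun S : {set T} => x \in S)) /= addrC; congr (_ + _).
  apply: eq_bigl => S; apply/andP/idP => [[/subsetP sub nx]|/subsetP sub].
    apply/subsetP => y yS; have := sub y yS; rewrite !inE; case/orP => // /eqP e.
    by subst y; rewrite yS in nx.
  split; last by apply/negP => /sub; rewrite (negbTE xR).
  by apply/subsetP => y /sub yR; rewrite !inE yR orbT.
rewrite (reindex_onto (fun S => x |: S) (fun S => S :\ x)) /=; last first.
  by move=> S /andP [_ xS]; rewrite setD1K.
apply: eq_bigl => S; rewrite setU11 andbT.
apply/andP/idP => [[sub e]|sub].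
  rewrite -(eqP e); apply/subsetP => y; rewrite in_setD1 => /andP [ne yxS].
  by have := subsetP sub y yxS; rewrite in_setU1 (negbTE ne).
have xS : x \notin S by apply/negP => /(subsetP sub); rewrite (negbTE xR).
split; first by rewrite setUS.
apply/eqP/setP => y; rewrite !inE; case: eqP => [->|] //=; by rewrite (negbTE xS).
Qed.

Lemma bridge_gen r : uniq r -> forall A, mono A ->
  \sum_(S : {set T} | S \subset [set x in r])
     ((\prod_(w in S) pe (g w)) * (\prod_(w in [set x in r] :\: S) (1 - pe (g w))) *
      indic R (A (EoS S))) = Pl pe (map g r) A.
Proof.
elim: r => [|x r IH] /=.
  move=> _ A mA.
  have -> : [set x in [::]] = set0 :> {set T} by apply/setP => y; rewrite !inE.
  rewrite (eq_bigl (fun S => S == set0)); last by move=> S; rewrite subset0.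
  rewrite big_pred1_eq !big_set0 !mul1r setD0 big_set0 mul1r; apply: indic_ext; split; apply: mA.
    by move=> y [w]; rewrite inE.
  by [].
case/andP=> xr ur A mA.
have -> : [set y in x :: r] = x |: [set y in r] by apply/setP => y; rewrite !inE.
have xR : x \notin [set y in r] by rewrite inE.
rewrite sum_split //.
rewrite -(IH ur A mA) -(IH ur _ (mono_sect mA)) !mulr_sumr.
congr (_ + _); apply: eq_bigr => S sub.
  have xS : x \notin S by apply/negP => /(subsetP sub); rewrite (negbTE xR).
  have -> : (x |: [set y in r]) :\: S = x |: ([set y in r] :\: S).
    by apply/setP => y; rewrite !inE; case: eqP => [->|]; rewrite ?(negbTE xS).
  rewrite big_setU1 /=; last by rewrite inE negb_and xR orbT.
  ring.
have xS : x \notin S by apply/negP => /(subsetP sub); rewrite (negbTE xR).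
have -> : (x |: [set y in r]) :\: (x |: S) = [set y in r] :\: S.
  by apply/setP => y; rewrite !inE; case: eqP => [->|] //=; rewrite ?(negbTE xr) ?(negbTE xS) ?andbF.
rewrite big_setU1 //=.
have -> : indic R (A (EoS (x |: S))) = indic R (sect (g x) A (EoS S)).
  apply: indic_ext; split; apply: mA => e.
    case=> w; rewrite !inE; case/orP => [/eqP ->|wS] ->; [by left|right; by exists w].
  case=> [->|[w wS ->]]; [exists x; rewrite ?inE ?eqxx //|exists w => //; rewrite inE wS orbT].
all: try done. by rewrite !mulrA.
Qed.

Lemma bridge (A : event X) : mono A ->
  \sum_(S : {set T}) ((\prod_(w in S) pe (g w)) * (\prod_(w in ~: S) (1 - pe (g w))) *
      indic R (A (EoS S))) = Pl pe (map g (enum T)) A.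
Proof.
move=> mA; rewrite -bridge_gen ?enum_uniq //.
have -> : [set x in enum T] = setT by apply/setP => y; rewrite !inE mem_enum.
symmetry; rewrite (eq_bigl predT); last by move=> S; rewrite subsetT.
by apply: eq_bigr => S _; rewrite setTD.
Qed.
End Bridge.

Section Geo.
Variables (D Q : nat).
Local Notation V := (Vertex D).

Lemma dist_coord (x y : V) i : (absz (x i - y i) <= dist x y)%N.
Proof. by rewrite /dist (bigD1 i) //= leq_addr. Qed.

Lemma dist_sym (x y : V) : dist x y = dist y x.
Proof. by apply: eq_bigr => i _; rewrite -abszN opprB. Qed.

Lemma dist_xx (x : V) : dist x x = 0%N.
Proof. by rewrite /dist big1 // => i _; rewrite subrr. Qed.

Lemma dist_shift (x : V) i : dist x (shift x i) = 1%N.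
Proof.
rewrite /dist (bigD1 i) //= big1 => [|j ji]; rewrite /shift ffunE.
  by rewrite eqxx opprD addrA subrr.
by rewrite (negbTE ji) addr0 subrr.
Qed.

Lemma mem_cv (c : seq (Edge D)) e : e \in c ->
  e.1 \in chunk_vertices c /\ shift e.1 e.2 \in chunk_vertices c.
Proof.
elim: c => [|e' c IH] //; rewrite inE /chunk_vertices /= => /orP [/eqP ->|/IH].
  by rewrite !inE !eqxx orbT.
rewrite /chunk_vertices => -[h1 h2]; by rewrite !inE h1 h2 !orbT.
Qed.

Lemma cv_cat (c1 c2 : seq (Edge D)) :
  chunk_vertices (c1 ++ c2) = chunk_vertices c1 ++ chunk_vertices c2.
Proof. by rewrite /chunk_vertices map_cat flatten_cat. Qed.

Lemma width_le (c : seq (Edge D)) k k' : k \in chunk_vertices c -> k' \in chunk_vertices c ->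
  (dist k k' <= width c)%N.
Proof.
move=> hk hk'; rewrite /width.
apply: leq_trans (@leq_bigmax_seq _ (chunk_vertices c) xpredT (fun k' => dist k k') k' hk' isT) _.
exact: (@leq_bigmax_seq _ (chunk_vertices c) xpredT (fun k => \max_(k' <- chunk_vertices c) dist k k') k hk isT).
Qed.

Lemma chunk_width n (ch : seq (Edge D)) : chunk_lvl Q n ch -> (width ch <= Q ^ n)%N.
Proof.
case=> [e|m c1 c2 _ _ _ //].
rewrite expn0; apply/bigmax_leqP_seq => k hk _; apply/bigmax_leqP_seq => k' hk' _.
move: hk hk'; rewrite /chunk_vertices /= !inE.
by case/orP=> /eqP -> /orP [] /eqP ->; rewrite ?dist_xx ?dist_shift // dist_sym dist_shift.
Qed.

Lemma chunk_ne n (ch : seq (Edge D)) : chunk_lvl Q n ch -> exists e, e \in ch.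
Proof.
elim=> [e|m c1 c2 _ [e he] _ _ _ _]; first by exists e; rewrite inE.
by exists e; rewrite mem_cat he.
Qed.

Lemma in_box_near (c v x : V) N : in_box c N v -> (dist x v <= N)%N ->
  in_box [ffun i => c i - Posz N] (3 * N) x.
Proof.
move=> /forallP hv hd; apply/forallP => i; rewrite ffunE.
have := dist_coord x v i; have := hv i; case/andP => h1 h2 h3.
apply/andP; split; lia.
Qed.

Lemma chunk_in_window n (ch : seq (Edge D)) (c v : V) : chunk_lvl Q n ch -> v \in chunk_vertices ch ->
  in_box c (Q ^ n) v -> forall x, x \in chunk_vertices ch ->
  in_box [ffun i => c i - Posz (Q ^ n)] (3 * Q ^ n) x.
Proof.
move=> hch hv hb x hx; apply: in_box_near hb _.
apply: leq_trans (width_le hx hv) (chunk_width hch).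
Qed.

Definition wlist (c0 : V) L := map (@win_edge D c0 L) (enum [set: WinT D L]).

Lemma win_edge_inj (c0 : V) L : injective (@win_edge D c0 L).
Proof.
move=> [[k1 i1] p1] [[k2 i2] p2]; rewrite /win_edge /= => -[hk hi].
subst i2; apply: val_inj => /=; congr (_, _); apply/ffunP => j.
have := congr1 (fun f : Vertex D => f j) hk; rewrite /vtx !ffunE => /addrI [] h.
exact: ord_inj.
Qed.

Lemma wlist_uniq c0 L : uniq (wlist c0 L).
Proof. by rewrite map_inj_uniq ?enum_uniq //; apply: win_edge_inj. Qed.

Lemma edge_in_wlist (c0 : V) L (e : Edge D) : in_box c0 L e.1 -> in_box c0 L (shift e.1 e.2) ->
  e \in wlist c0 L.
Proof.
case: e => x i /= /forallP h1 /forallP h2.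
have L0 : (0 < L)%N by have := h1 i; case/andP; lia.
pose k := [ffun j => Ordinal (ltn_pmod (absz (x j - c0 j)) L0)] : {ffun 'I_D -> 'I_L}.
have hk j : Posz (k j) = x j - c0 j.
  rewrite ffunE /= modn_small; have := h1 j; case/andP; lia.
have pw : ((k i).+1 < L)%N.
  have := h2 i; rewrite /shift ffunE eqxx => /andP [a b]; have := hk i; lia.
have -> : (x, i) = win_edge c0 (exist _ (k, i) pw : WinT D L).
  rewrite /win_edge /vtx /=; congr (_, _); apply/ffunP => j; rewrite ffunE hk; ring.
by rewrite /wlist; apply: map_f; rewrite mem_enum inE.
Qed.

Definition corner (c0 : V) M (j : {ffun 'I_D -> 'I_(3 * Q)}) : V :=
  [ffun i => c0 i + Posz (j i * M)].

Lemma sub_box (c0 x : V) M : (0 < M)%N -> (2 <= Q)%N -> in_box c0 (3 * Q * M) x ->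
  exists j, in_box (corner c0 M j) M x.
Proof.
move=> M0 Q2 /forallP h.
have Q0 : (0 < 3 * Q)%N by lia.
pose j := [ffun i => Ordinal (ltn_pmod (absz (x i - c0 i) %/ M) Q0)].
exists j; apply/forallP => i; rewrite /corner !ffunE /=.
have := h i; case/andP => a b.
have dlt : (absz (x i - c0 i) %/ M < 3 * Q)%N by rewrite ltn_divLR //; lia.
rewrite modn_small //.
have := divn_eq (absz (x i - c0 i)) M; have := ltn_pmod (absz (x i - c0 i)) M0.
move: (absz (x i - c0 i) %/ M)%N (absz (x i - c0 i) %% M)%N => u v.
lia.
Qed.
End Geo.

Unset Implicit Arguments.
Section Main.
Variables (R : realFieldType) (D Q : nat) (pe : Edge D -> R).
Hypothesis hpe : forall e, 0 <= pe e <= 1.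
Hypothesis hQ : (2 <= Q)%N.

Definition wc (n : nat) (c : Vertex D) : Vertex D := [ffun i => c i - Posz (Q ^ n)].
Definition tw n c := wlist (wc n c) (3 * Q ^ n).

Lemma A_mono n (c : Vertex D) : mono (A_event Q n c).
Proof. move=> E F H [ch [hc [hE hh]]]; exists ch; split=> //; split=> // e /hE /H //. Qed.

Lemma PrA_Pl n (c : Vertex D) : PrA Q pe n c = Pl pe (tw n c) (A_event Q n c).
Proof.
rewrite /PrA /Pr_win (@bridge _ _ _ (@win_edge D (wc n c) (3 * Q ^ n)) pe _ (A_mono n c)).
by rewrite /tw /wlist enum_setT enumT.
Qed.

Lemma A_dep n (c : Vertex D) : dep (A_event Q n c) (tw n c).
Proof.
move=> E [ch [hc [hE hh]]]; exists ch; split=> //; split=> //.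
move=> e he; split; first exact: hE.
have [v hv hb] := hasP hh.
have [h1 h2] := mem_cv he.
by apply: edge_in_wlist; apply: (chunk_in_window hc hv hb).
Qed.

Definition Jt := {ffun 'I_D -> 'I_(3 * Q)}.
Definition Aj m (c : Vertex D) (j : Jt) := A_event Q m (@corner D Q (wc m.+1 c) (Q ^ m) j).

Lemma decomp m (c : Vertex D) E : A_event Q m.+1 c E ->
  exists jk : Jt * Jt, box (Aj m c jk.1) (Aj m c jk.2) E.
Proof.
case=> ch [hc [hE hh]]; have [v hv hb] := hasP hh.
have hw := chunk_in_window hc hv hb.
have subj x : x \in chunk_vertices ch -> exists j : Jt, in_box (@corner D Q (wc m.+1 c) (Q ^ m) j) (Q ^ m) x.
  move=> /hw hx; apply: sub_box => //; first by rewrite expn_gt0; lia.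
  by rewrite -mulnA -expnS.
inversion hc as [|m' c1 c2 h1 h2 hd hwd]; subst.
have [e1 he1] := chunk_ne h1; have [e2 he2] := chunk_ne h2.
have [v1 _] := mem_cv he1; have [v2 _] := mem_cv he2.
have [j1 hj1] : exists j : Jt, in_box (@corner D Q (wc m.+1 c) (Q ^ m) j) (Q ^ m) e1.1.
  by apply: subj; rewrite cv_cat mem_cat v1.
have [j2 hj2] : exists j : Jt, in_box (@corner D Q (wc m.+1 c) (Q ^ m) j) (Q ^ m) e2.1.
  by apply: subj; rewrite cv_cat mem_cat v2 orbT.
exists (j1, j2), (fun e => e \in c1), (fun e => e \in c2); split; last split; last split.
- by move=> x x1 x2; move/hasP: hd; apply; exists x.
- by move=> x x1; apply: hE; rewrite mem_cat x1.
- by move=> x x2; apply: hE; rewrite mem_cat x2 orbT.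
split.
  by exists c1; split=> //; split=> //; apply/hasP; exists e1.1.
by exists c2; split=> //; split=> //; apply/hasP; exists e2.1.
Qed.

Lemma PrA_ge0 n (c : Vertex D) : 0 <= PrA Q pe n c.
Proof. by rewrite PrA_Pl; apply: Pl_ge0. Qed.

Lemma step m b : (forall c, PrA Q pe m c <= b) ->
  forall c, PrA Q pe m.+1 c <= (((3 * Q) ^ D)%:R * b) ^+ 2.
Proof.
move=> hb c; rewrite PrA_Pl.
apply: le_trans (Pl_mono hpe _ (fun E => @decomp m c E)) _.
apply: le_trans (Pl_union hpe _ (fun jk : Jt * Jt => box (Aj m c jk.1) (Aj m c jk.2))) _.
have hb0 : 0 <= b by apply: le_trans (hb c); apply: PrA_ge0.
have key (j : Jt) : Pl pe (tw m.+1 c) (Aj m c j) <= b.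
  apply: le_trans (hb (@corner D Q (wc m.+1 c) (Q ^ m) j)); rewrite PrA_Pl.
  apply: Pl_marg => //; [exact: wlist_uniq|exact: A_mono|exact: A_dep].
apply: le_trans (_ : \sum_(jk : Jt * Jt) b * b <= _).
  apply: ler_sum => -[j k] _ /=.
  apply: le_trans (BK hpe _ (A_mono _ _) (A_mono _ _)) _.
  by apply: ler_pM; rewrite ?Pl_ge0 ?key.
rewrite sumr_const card_prod card_ffun !card_ord.
by rewrite -[X in X <= _]mulr_natr natrM expr2 le_eqVlt; apply/orP; left; apply/eqP; ring.
Qed.
End Main.

Theorem mainTheorem3 (R : realFieldType) (D Q : nat) (hD : (1 <= D)%N) (hQ : (2 <= Q)%N)
  (p : R) (pe : Edge D -> R)
  (hpe : forall e, 0 <= pe e <= 1) (hpep : forall e, pe e <= p)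
  (ha0 : forall c : Vertex D, PrA Q pe 0 c <= p) :
  (forall n : nat, (1 <= n)%N -> forall b : R,
     (forall c : Vertex D, PrA Q pe n.-1 c <= b) ->
     forall c : Vertex D, PrA Q pe n c <= (((3 * Q) ^ D)%:R * b) ^+ 2)
  /\
  (forall (m : nat) (c : Vertex D),
     PrA Q pe m c <= (((3 * Q) ^ (2 * D))%:R * p) ^+ (2 ^ m)).
Proof.
have P1 : forall n : nat, (1 <= n)%N -> forall b : R,
     (forall c : Vertex D, PrA Q pe n.-1 c <= b) ->
     forall c : Vertex D, PrA Q pe n c <= (((3 * Q) ^ D)%:R * b) ^+ 2.
  by case=> [//|m] _ b hb c; apply: (step R D Q pe hpe hQ m b hb c).
split=> //.
set q : R := ((3 * Q) ^ D)%:R.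
have q1 : 1 <= q by rewrite /q ler1n expn_gt0; lia.
have q0 : 0 < q ^+ 2 by rewrite exprn_gt0 // (lt_le_trans ltr01 q1).
have eq2 : ((3 * Q) ^ (2 * D))%:R = q ^+ 2 :> R.
  by rewrite /q (mulnC 2 D) expnM natrX.
rewrite eq2.
have H : forall m (c : Vertex D), q ^+ 2 * PrA Q pe m c <= (q ^+ 2 * p) ^+ (2 ^ m).
  elim=> [|m IH] c.
    by rewrite expn0 expr1; apply: ler_wpM2l; [exact: ltW|exact: ha0].
  have hb : forall c : Vertex D, PrA Q pe m c <= (q ^+ 2 * p) ^+ (2 ^ m) / q ^+ 2.
    by move=> c'; rewrite ler_pdivlMr // mulrC; exact: IH.
  have := P1 m.+1 isT _ hb c => /= h.
  apply: le_trans (ler_wpM2l (ltW q0) h) _.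
  rewrite expnSr exprM; set y := (q ^+ 2 * p) ^+ (2 ^ m).
  rewrite le_eqVlt; apply/orP; left; apply/eqP. field.
  by rewrite gt_eqF // (lt_le_trans ltr01 q1).
move=> m c; apply: le_trans (H m c).
by rewrite ler_peMl ?PrA_ge0 // (le_trans q1) // ler_eXnr.
Qed.
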